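(* Let $L$ be a Lie algebra over a field $F$ generated by elements $a_1,\dots,a_m$ such that every element of the Lie set $S\langle a_1,\dots,a_m\rangle$ is ad-nilpotent. Let $I$ be an ideal of $L$ of finite codimension. Then $I$ is finitely generated as a Lie algebra.
   Context: An element $a\in L$ is ad-nilpotent if $\operatorname{ad}(a):x\mapsto[x,a]$ is a nilpotent operator on $L$. $S\langle a_1,\dots,a_m\rangle$ is the smallest subset of $L$ containing $a_1,\dots,a_m$ and closed under the bracket, i.e. the set of the $a_i$ and all iterated commutators in them. *)

(* Defs.v *)
From HB Require Import structures.
From mathcomp Require Import all_boot all_order all_algebra.
Set Implicit Arguments. Unset Strict Implicit. Unset Printing Implicit Defensive.
Import GRing.Theory.
Local Open Scope ring_scope.

Definition is_lie_bracket (F : fieldType) (L : lmodType F) (br : L -> L -> L) : Prop :=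
  [/\ (forall (c : F) (x y z : L), br (c *: x + y) z = c *: br x z + br y z),
      (forall (c : F) (x y z : L), br x (c *: y + z) = c *: br x y + br x z),
      (forall x : L, br x x = 0)
    & (forall x y z : L, br x (br y z) + br y (br z x) + br z (br x y) = 0)].

Inductive lie_gen (F : fieldType) (L : lmodType F) (br : L -> L -> L) (s : seq L)
  : L -> Prop :=
  | lg_gen x : x \in s -> lie_gen br s x
  | lg_zero : lie_gen br s 0
  | lg_add x y : lie_gen br s x -> lie_gen br s y -> lie_gen br s (x + y)
  | lg_scale (c : F) x : lie_gen br s x -> lie_gen br s (c *: x)
  | lg_br x y : lie_gen br s x -> lie_gen br s y -> lie_gen br s (br x y).

Inductive lie_set (F : fieldType) (L : lmodType F) (br : L -> L -> L) (s : seq L)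
  : L -> Prop :=
  | ls_gen x : x \in s -> lie_set br s x
  | ls_br x y : lie_set br s x -> lie_set br s y -> lie_set br s (br x y).

Definition ad_nilpotent (F : fieldType) (L : lmodType F) (br : L -> L -> L) (a : L) : Prop :=
  exists n : nat, forall x : L, iter n (fun y => br y a) x = 0.

Definition lie_ideal (F : fieldType) (L : lmodType F) (br : L -> L -> L) (I : L -> Prop) : Prop :=
  [/\ I 0,
      (forall x y, I x -> I y -> I (x + y)),
      (forall (c : F) x, I x -> I (c *: x))
    & (forall x y, I y -> I (br x y))].

(* Finite codimension: L/I is finite dimensional, i.e. L = span(vs) + I
   for some finite family vs. *)
Definition finite_codim (F : fieldType) (L : lmodType F) (I : L -> Prop) : Prop :=
  exists vs : seq L, forall x : L,
    exists (c : nat -> F) (y : L), I y /\ x = \sum_(i < size vs) c i *: vs`_i + y.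

Definition lie_fin_gen (F : fieldType) (L : lmodType F) (br : L -> L -> L) (I : L -> Prop) : Prop :=
  exists s : seq L, forall x : L, I x <-> lie_gen br s x.

(* Main.v *)
Require Import Defs.
From mathcomp Require Import all_boot all_order all_algebra.
From mathcomp Require Import zify.
From Stdlib Require Import Classical.
Set Implicit Arguments. Unset Strict Implicit. Unset Printing Implicit Defensive.
Import GRing.Theory.
Local Open Scope ring_scope.


Lemma br0l (F : fieldType) (L : lmodType F) (br : L -> L -> L) :
  is_lie_bracket br -> forall z, br 0 z = 0.
Proof.
case=> hl _ _ _ z; have h := hl 1 0 0 z; rewrite !scale1r addr0 in h.
by apply: (addrI (br 0 z)); rewrite addr0 -h.
Qed.

Lemma br0r (F : fieldType) (L : lmodType F) (br : L -> L -> L) :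
  is_lie_bracket br -> forall z, br z 0 = 0.
Proof.
case=> _ hr _ _ z; have h := hr 1 z 0 0; rewrite !scale1r addr0 in h.
by apply: (addrI (br z 0)); rewrite addr0 -h.
Qed.

Lemma brDl (F : fieldType) (L : lmodType F) (br : L -> L -> L) :
  is_lie_bracket br -> forall x y z, br (x + y) z = br x z + br y z.
Proof. by case=> hl _ _ _ x y z; have h := hl 1 x y z; rewrite !scale1r in h. Qed.

Lemma brDr (F : fieldType) (L : lmodType F) (br : L -> L -> L) :
  is_lie_bracket br -> forall x y z, br x (y + z) = br x y + br x z.
Proof. by case=> _ hr _ _ x y z; have h := hr 1 x y z; rewrite !scale1r in h. Qed.

Lemma brZl (F : fieldType) (L : lmodType F) (br : L -> L -> L) :
  is_lie_bracket br -> forall c x z, br (c *: x) z = c *: br x z.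
Proof.
move=> hb c x z; have := hb; case=> hl _ _ _.
by have h := hl c x 0 z; rewrite !addr0 (br0l hb) addr0 in h.
Qed.

Lemma brZr (F : fieldType) (L : lmodType F) (br : L -> L -> L) :
  is_lie_bracket br -> forall c x z, br x (c *: z) = c *: br x z.
Proof.
move=> hb c x z; have := hb; case=> _ hr _ _.
by have h := hr c x z 0; rewrite !addr0 (br0r hb) addr0 in h.
Qed.

Lemma brNl (F : fieldType) (L : lmodType F) (br : L -> L -> L) :
  is_lie_bracket br -> forall x z, br (- x) z = - br x z.
Proof. by move=> hb x z; rewrite -scaleN1r brZl // scaleN1r. Qed.

Lemma brNr (F : fieldType) (L : lmodType F) (br : L -> L -> L) :
  is_lie_bracket br -> forall x z, br x (- z) = - br x z.
Proof. by move=> hb x z; rewrite -scaleN1r brZr // scaleN1r. Qed.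

Lemma brC (F : fieldType) (L : lmodType F) (br : L -> L -> L) :
  is_lie_bracket br -> forall x y, br y x = - br x y.
Proof.
move=> hb x y; have := hb; case=> _ _ ha _.
have h := ha (x + y); rewrite !(brDl hb) !(brDr hb) !ha add0r addr0 in h.
by apply/eqP; rewrite -addr_eq0 addrC h.
Qed.

Lemma brJ (F : fieldType) (L : lmodType F) (br : L -> L -> L) :
  is_lie_bracket br -> forall x y z,
  br (br x y) z = br (br x z) y + br x (br y z).
Proof.
move=> hb x y z; have := hb; case=> _ _ _ hj.
have h := hj x y z; move/eqP: h; rewrite addrC addr_eq0 => /eqP h.
rewrite (brC hb z (br x y)) h opprK (brC hb y (br x z)) (brC hb z x) (brNr hb).
by rewrite opprK addrC.
Qed.

Definition ad_seq (F : fieldType) (L : lmodType F) (br : L -> L -> L) (x : L) (ps : seq L) :=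
  foldl (fun y b => br y b) x ps.

Inductive spanP (F : fieldType) (L : lmodType F) (P : L -> Prop) : L -> Prop :=
  | sp_gen x : P x -> spanP P x
  | sp_zero : spanP P 0
  | sp_add x y : spanP P x -> spanP P y -> spanP P (x + y)
  | sp_scale (c : F) x : spanP P x -> spanP P (c *: x).

Lemma ad_seq_cat (F : fieldType) (L : lmodType F) (br : L -> L -> L) x s1 s2 :
  ad_seq br x (s1 ++ s2) = ad_seq br (ad_seq br x s1) s2.
Proof. by rewrite /ad_seq foldl_cat. Qed.

Lemma ad_seq0 (F : fieldType) (L : lmodType F) (br : L -> L -> L) :
  is_lie_bracket br -> forall ps, ad_seq br 0 ps = 0.
Proof. by move=> hb; elim=> //= p ps IH; rewrite /ad_seq /= (br0l hb). Qed.

Lemma ad_seqD (F : fieldType) (L : lmodType F) (br : L -> L -> L) :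
  is_lie_bracket br -> forall ps x y, ad_seq br (x + y) ps = ad_seq br x ps + ad_seq br y ps.
Proof. by move=> hb; elim=> //= p ps IH x y; rewrite /ad_seq /= (brDl hb) -!/(ad_seq _ _ _) IH. Qed.

Lemma ad_seqZ (F : fieldType) (L : lmodType F) (br : L -> L -> L) :
  is_lie_bracket br -> forall ps c x, ad_seq br (c *: x) ps = c *: ad_seq br x ps.
Proof. by move=> hb; elim=> //= p ps IH c x; rewrite /ad_seq /= (brZl hb) -!/(ad_seq _ _ _) IH. Qed.

Lemma ad_seqN (F : fieldType) (L : lmodType F) (br : L -> L -> L) :
  is_lie_bracket br -> forall ps x, ad_seq br (- x) ps = - ad_seq br x ps.
Proof. by move=> hb ps x; rewrite -scaleN1r (ad_seqZ hb) scaleN1r. Qed.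

Lemma ad_seqB (F : fieldType) (L : lmodType F) (br : L -> L -> L) :
  is_lie_bracket br -> forall ps x y, ad_seq br (x - y) ps = ad_seq br x ps - ad_seq br y ps.
Proof. by move=> hb ps x y; rewrite (ad_seqD hb) (ad_seqN hb). Qed.

Lemma ad_seq_nseq (F : fieldType) (L : lmodType F) (br : L -> L -> L) n p x :
  ad_seq br x (nseq n p) = iter n (fun y => br y p) x.
Proof. elim: n x => // n IH x; rewrite [nseq _ _]/= /ad_seq /= -/(ad_seq _ _ _) IH; exact: esym (iterSr _ _ _). Qed.

Lemma lgN (F : fieldType) (L : lmodType F) (br : L -> L -> L) G x :
  lie_gen br G x -> lie_gen br G (- x).
Proof. by move=> h; rewrite -scaleN1r; apply: lg_scale. Qed.

Lemma lgB (F : fieldType) (L : lmodType F) (br : L -> L -> L) G x y :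
  lie_gen br G x -> lie_gen br G y -> lie_gen br G (x - y).
Proof. by move=> hx hy; apply: lg_add => //; apply: lgN. Qed.

Lemma spanP_mono (F : fieldType) (L : lmodType F) (P Q : L -> Prop) x :
  spanP P x -> (forall y, P y -> Q y) -> spanP Q x.
Proof.
move=> h hPQ; elim: h => [y /hPQ|||]; by [apply: sp_gen|apply: sp_zero|
  move=> ? ? _ ? _ ?; apply: sp_add|move=> ? ? _ ?; apply: sp_scale].
Qed.

Lemma leib (F : fieldType) (L : lmodType F) (br : L -> L -> L) (B G : seq L) :
  is_lie_bracket br -> forall ps u v,
  (forall s, all (mem B) s -> (size s <= size ps)%N -> lie_gen br G (ad_seq br u s)) ->
  (forall s, all (mem B) s -> (size s <= size ps)%N -> lie_gen br G (ad_seq br v s)) ->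
  all (mem B) ps -> lie_gen br G (ad_seq br (br u v) ps).
Proof.
move=> hb; elim=> [|p ps IH] u v hu hv hps.
  by apply: lg_br; [exact: (hu [::])|exact: (hv [::])].
move: hps => /= /andP [hp hps].
rewrite /ad_seq /= -/(ad_seq _ _ _) (brJ hb) (ad_seqD hb).
apply: lg_add; apply: IH => // s hs hsz.
- by have := hu (p :: s); rewrite /= hp hs /=; apply.
- by apply: hv => //; rewrite /= ltnW // ltnS.
- by apply: hu => //; rewrite /= ltnW // ltnS.
- by have := hv (p :: s); rewrite /= hp hs /=; apply.
Qed.

Lemma swap_lem (F : fieldType) (L : lmodType F) (br : L -> L -> L) (B T G : seq L) n :
  is_lie_bracket br ->
  (forall p q, p \in B -> q \in B -> exists w y,
      [/\ spanP (fun z => z \in B) w, y \in T & br p q = w + y]) ->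
  (forall t s, t \in T -> all (mem B) s -> (size s < n)%N -> lie_gen br G (ad_seq br t s)) ->
  forall t s0 p q s2, t \in T -> all (mem B) (s0 ++ p :: q :: s2) ->
  size (s0 ++ p :: q :: s2) = n ->
  lie_gen br G (ad_seq br t (s0 ++ p :: q :: s2) - ad_seq br t (s0 ++ q :: p :: s2)).
Proof.
move=> hb hpair IH t s0 p q s2 ht hall hsz.
move: hall; rewrite all_cat /= => /and4P [h0 hp hq h2].
rewrite size_cat /= in hsz.
rewrite !ad_seq_cat; set x := ad_seq br t s0.
rewrite /ad_seq /= -!/(ad_seq _ _ _) -(ad_seqB hb) (brJ hb x p q).
rewrite [X in ad_seq _ X _]addrC addKr.
have [w [y [hw hy ->]]] := hpair p q hp hq.
rewrite (brDr hb) (ad_seqD hb); apply: lg_add.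
  elim: hw => [r hr||w1 w2 _ IH1 _ IH2|c w1 _ IH1].
  - rewrite /x -[br _ r]/(ad_seq br (ad_seq br t s0) [:: r]) -!ad_seq_cat.
    apply: IH => //; first by rewrite all_cat h0 /= hr h2.
    by rewrite size_cat /=; lia.
  - by rewrite (br0r hb) (ad_seq0 hb); apply: lg_zero.
  - by rewrite (brDr hb) (ad_seqD hb); apply: lg_add.
  - by rewrite (brZr hb) (ad_seqZ hb); apply: lg_scale.
apply: (leib (B:=B) hb) => // s hs hs'.
  rewrite /x -ad_seq_cat; apply: IH => //; first by rewrite all_cat h0 hs.
  by rewrite size_cat -hsz ltn_add2l ltnS leqW.
by apply: IH => //; rewrite -hsz; apply: ltn_addl; rewrite ltnS leqW.
Qed.

Lemma all_sub (T : eqType) (a : pred T) (s s' : seq T) :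
  (forall z, z \in s -> z \in s') -> all a s' -> all a s.
Proof. by move=> hs /allP h; apply/allP => z /hs /h. Qed.

Lemma move_lem (F : fieldType) (L : lmodType F) (br : L -> L -> L) (B T G : seq L) n :
  is_lie_bracket br ->
  (forall p q, p \in B -> q \in B -> exists w y,
      [/\ spanP (fun z => z \in B) w, y \in T & br p q = w + y]) ->
  (forall t s, t \in T -> all (mem B) s -> (size s < n)%N -> lie_gen br G (ad_seq br t s)) ->
  forall t p s1 s0 s2, t \in T -> all (mem B) (s0 ++ s1 ++ p :: s2) ->
  size (s0 ++ s1 ++ p :: s2) = n ->
  lie_gen br G (ad_seq br t (s0 ++ s1 ++ p :: s2) - ad_seq br t (s0 ++ p :: s1 ++ s2)).
Proof.
move=> hb hpair IH t p; elim=> [|x s1 IH1] s0 s2 ht hall hsz.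
  by rewrite /= subrr; apply: lg_zero.
have e1 : s0 ++ (x :: s1) ++ p :: s2 = (s0 ++ [:: x]) ++ s1 ++ p :: s2 by rewrite -catA.
have e2 : s0 ++ x :: p :: s1 ++ s2 = (s0 ++ [:: x]) ++ p :: s1 ++ s2 by rewrite -catA.
have h1 := IH1 (s0 ++ [:: x]) s2 ht.
rewrite -e1 -e2 in h1; have {h1} h1 := h1 hall hsz.
have h2 := swap_lem hb hpair IH ht (s0 := s0) (p := x) (q := p) (s2 := s1 ++ s2).
suff h3 : lie_gen br G (ad_seq br t (s0 ++ x :: p :: s1 ++ s2) - ad_seq br t (s0 ++ p :: x :: s1 ++ s2)).
  by have := lg_add h1 h3; rewrite addrA subrK.
apply: h2.
  apply: (all_sub _ hall) => z; rewrite !mem_cat !in_cons !mem_cat.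
  by case: (z \in s0); case: (z == x); case: (z == p); case: (z \in s1); case: (z \in s2).
by move: hsz; rewrite !size_cat /= => <-; rewrite size_cat /=; lia.
Qed.

Lemma cnt_le (T : eqType) (B s : seq T) N :
  (forall p, p \in B -> (count_mem p s < N)%N) -> (count (mem B) s <= size B * N)%N.
Proof.
elim: B => [|b B IH] h.
  by rewrite (@eq_count _ _ pred0) ?count_pred0 // => z; rewrite /= in_nil.
rewrite (@eq_count _ _ (predU (pred1 b) (mem B))); last by move=> z; rewrite /= in_cons.
apply: leq_trans (leq_addr (count (predI (pred1 b) (mem B)) s) _) _.
rewrite count_predUI /= mulSn; apply: leq_add.
  by apply: ltnW; apply: h; rewrite in_cons eqxx.
by apply: IH => p hp; apply: h; rewrite in_cons hp orbT.
Qed.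

Lemma pigeon (T : eqType) (B s : seq T) N :
  all (mem B) s -> (size B * N < size s)%N -> exists p, p \in B /\ (N <= count_mem p s)%N.
Proof.
move=> hall hlt; case: (boolP (has (fun p => N <= count_mem p s)%N B)).
  by case/hasP => p hp hc; exists p.
move/hasPn => h; exfalso.
have : (count (mem B) s <= size B * N)%N.
  by apply: cnt_le => p /h; rewrite -ltnNge.
by move: hall; rewrite all_count => /eqP ->; rewrite leqNgt hlt.
Qed.

Lemma front_lem (F : fieldType) (L : lmodType F) (br : L -> L -> L) (B T G : seq L) n :
  is_lie_bracket br ->
  (forall p q, p \in B -> q \in B -> exists w y,
      [/\ spanP (fun z => z \in B) w, y \in T & br p q = w + y]) ->
  (forall t s, t \in T -> all (mem B) s -> (size s < n)%N -> lie_gen br G (ad_seq br t s)) ->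
  forall t p ps, t \in T -> all (mem B) ps -> size ps = n ->
  forall j, (j <= count_mem p ps)%N -> exists rest,
    [/\ all (mem B) (nseq j p ++ rest), size (nseq j p ++ rest) = n,
        lie_gen br G (ad_seq br t ps - ad_seq br t (nseq j p ++ rest))
      & (count_mem p rest + j = count_mem p ps)%N].
Proof.
move=> hb hpair IH t p ps ht hall hsz; elim=> [_|j IHj hj].
  by exists ps; split => //; [rewrite subrr; apply: lg_zero | rewrite addn0].
have [rest [h1 h2 h3 h4]] := IHj (ltnW hj).
have hp : p \in rest by rewrite -has_pred1 has_count; move: hj; rewrite -h4; lia.
case/splitPr: hp h1 h2 h3 h4 => r1 r2 h1 h2 h3 h4.
have hm := move_lem hb hpair IH ht (s0 := [::]) (p := p) (s1 := nseq j p ++ r1) (s2 := r2).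
rewrite /= -!catA in hm; have {hm} hm := hm h1 h2.
exists (r1 ++ r2); split.
- apply: (all_sub _ h1) => z; rewrite /= !mem_cat in_cons !mem_cat mem_nseq !in_cons.
  by case: (z == p); case: (z \in r1); case: (z \in r2); case: (0 < j)%N.
- by move: h2; rewrite /= !size_cat /= size_nseq; lia.
- by have := lg_add h3 hm; rewrite addrA subrK.
- by move: h4; rewrite !count_cat /= eqxx; lia.
Qed.

Lemma claim (F : fieldType) (L : lmodType F) (br : L -> L -> L) (B T G : seq L) N :
  is_lie_bracket br ->
  (forall p q, p \in B -> q \in B -> exists w y,
      [/\ spanP (fun z => z \in B) w, y \in T & br p q = w + y]) ->
  (forall t s, t \in T -> all (mem B) s -> (size s <= size B * N)%N ->
     lie_gen br G (ad_seq br t s)) ->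
  (forall b, b \in B -> forall x, iter N (fun y => br y b) x = 0) ->
  forall t s, t \in T -> all (mem B) s -> lie_gen br G (ad_seq br t s).
Proof.
move=> hb hpair hG hN.
suff h : forall n t s, t \in T -> all (mem B) s -> (size s < n)%N ->
    lie_gen br G (ad_seq br t s).
  by move=> t s ht hs; apply: (h (size s).+1).
elim=> [//|n IH] t s ht hs hsz.
case: (leqP (size s) (size B * N)) => hK; first exact: hG.
have [p [hp hc]] := pigeon hs hK.
have IH' : forall t s', t \in T -> all (mem B) s' -> (size s' < size s)%N ->
    lie_gen br G (ad_seq br t s').
  by move=> t' s' ht' hs' hlt; apply: IH => //; apply: leq_trans hlt _.
have [rest [_ _ h3 _]] := front_lem hb hpair IH' ht hs erefl hc.
by rewrite ad_seq_cat ad_seq_nseq (hN p hp) (ad_seq0 hb) subr0 in h3.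
Qed.

Lemma spanP_br (F : fieldType) (L : lmodType F) (br : L -> L -> L) (P : L -> Prop) :
  is_lie_bracket br -> (forall x y, P x -> P y -> P (br x y)) ->
  forall u v, spanP P u -> spanP P v -> spanP P (br u v).
Proof.
move=> hb hP u v hu hv; elim: hu => [x hx||u1 u2 _ IH1 _ IH2|c u1 _ IH1].
- elim: hv => [y hy||v1 v2 _ IH1 _ IH2|c v1 _ IH1].
  + by apply: sp_gen; apply: hP.
  + by rewrite (br0r hb); apply: sp_zero.
  + by rewrite (brDr hb); apply: sp_add.
  + by rewrite (brZr hb); apply: sp_scale.
- by rewrite (br0l hb); apply: sp_zero.
- by rewrite (brDl hb); apply: sp_add.
- by rewrite (brZl hb); apply: sp_scale.
Qed.

Lemma span_gen (F : fieldType) (L : lmodType F) (br : L -> L -> L) (a : seq L) :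
  is_lie_bracket br -> forall x, lie_gen br a x -> spanP (lie_set br a) x.
Proof.
move=> hb x; elim=> [y hy||x1 x2 _ IH1 _ IH2|c x1 _ IH1|x1 x2 _ IH1 _ IH2].
- by apply: sp_gen; apply: ls_gen.
- exact: sp_zero.
- exact: sp_add.
- exact: sp_scale.
- by apply: (spanP_br hb) => // u v hu hv; apply: ls_br.
Qed.

Lemma to_list (F : fieldType) (L : lmodType F) (P : L -> Prop) x :
  spanP P x -> exists B : seq L, (forall b, b \in B -> P b) /\ spanP (fun z => z \in B) x.
Proof.
elim=> [y hy||x1 x2 _ [B1 [h1 s1]] _ [B2 [h2 s2]]|c x1 _ [B1 [h1 s1]]].
- exists [:: y]; split; first by move=> b; rewrite inE => /eqP ->.
  by apply: sp_gen; rewrite inE.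
- by exists [::]; split => //; apply: sp_zero.
- exists (B1 ++ B2); split; first by move=> b; rewrite mem_cat => /orP [/h1|/h2].
  apply: sp_add.
    by apply: (spanP_mono s1) => y hy; rewrite mem_cat hy.
  by apply: (spanP_mono s2) => y hy; rewrite mem_cat hy orbT.
- by exists B1; split => //; apply: sp_scale.
Qed.

Lemma to_list_seq (F : fieldType) (L : lmodType F) (P : L -> Prop) (vs : seq L) :
  (forall v, v \in vs -> spanP P v) ->
  exists B : seq L, (forall b, b \in B -> P b) /\
    forall v, v \in vs -> spanP (fun z => z \in B) v.
Proof.
elim: vs => [|v vs IH] h; first by exists [::].
have [B1 [h1 s1]] := to_list (h v (mem_head _ _)).
have [B2 [h2 s2]] : exists B : seq L, (forall b, b \in B -> P b) /\
    forall v, v \in vs -> spanP (fun z => z \in B) v.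
  by apply: IH => w hw; apply: h; rewrite in_cons hw orbT.
exists (B1 ++ B2); split; first by move=> b; rewrite mem_cat => /orP [/h1|/h2].
move=> w; rewrite in_cons => /orP [/eqP ->|hw].
  by apply: (spanP_mono s1) => y hy; rewrite mem_cat hy.
by apply: (spanP_mono (s2 w hw)) => y hy; rewrite mem_cat hy orbT.
Qed.

Lemma span_sum (F : fieldType) (L : lmodType F) (P : L -> Prop) (vs : seq L) (c : nat -> F) :
  (forall v, v \in vs -> spanP P v) ->
  spanP P (\sum_(i < size vs) c i *: vs`_i).
Proof.
move=> h; apply: (big_ind (spanP P)); [exact: sp_zero|exact: sp_add|].
by move=> i _; apply: sp_scale; apply: h; apply: mem_nth.
Qed.

Lemma iter_fix0 (T : Type) (f : T -> T) (z : T) n : f z = z -> iter n f z = z.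
Proof. by move=> h; elim: n => //= n ->. Qed.

Lemma uniform_nil (F : fieldType) (L : lmodType F) (br : L -> L -> L) (B : seq L) :
  is_lie_bracket br -> (forall b, b \in B -> ad_nilpotent br b) ->
  exists N, forall b, b \in B -> forall x, iter N (fun y => br y b) x = 0.
Proof.
move=> hb; elim: B => [|b B IH] h; first by exists 0%N.
have [n1 hn1] := h b (mem_head _ _).
have [N2 hN2] : exists N, forall b, b \in B -> forall x, iter N (fun y => br y b) x = 0.
  by apply: IH => b' hb'; apply: h; rewrite in_cons hb' orbT.
exists (n1 + N2)%N => b'; rewrite in_cons => /orP [/eqP ->|hb'] x.
  by rewrite addnC iterD hn1 iter_fix0 // (br0l hb).
by rewrite iterD hN2 // iter_fix0 // (br0l hb).
Qed.

Lemma choose_list (F : fieldType) (L : lmodType F) (I : L -> Prop) (B xs : seq L) :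
  (forall x, exists w y, [/\ spanP (fun z => z \in B) w, I y & x = w + y]) ->
  exists T' : seq L, (forall y, y \in T' -> I y) /\
    forall x, x \in xs -> exists w y, [/\ spanP (fun z => z \in B) w, y \in T' & x = w + y].
Proof.
move=> hL; elim: xs => [|x xs [T' [h1 h2]]]; first by exists [::].
have [w [y [hw hy e]]] := hL x.
exists (y :: T'); split.
  by move=> z; rewrite in_cons => /orP [/eqP ->|/h1].
move=> z; rewrite in_cons => /orP [/eqP ->|hz].
  by exists w, y; split => //; rewrite mem_head.
have [w' [y' [hw' hy' e']]] := h2 z hz.
by exists w', y'; split => //; rewrite in_cons hy' orbT.
Qed.

Lemma span_cons (F : fieldType) (L : lmodType F) (b : L) (B : seq L) w :
  spanP (fun z => z \in b :: B) w ->
  exists c w', spanP (fun z => z \in B) w' /\ w = c *: b + w'.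
Proof.
elim=> [y||x1 x2 _ [c1 [w1 [h1 e1]]] _ [c2 [w2 [h2 e2]]]|c x _ [c1 [w1 [h1 e1]]]].
- rewrite in_cons => /orP [/eqP ->|hy].
    by exists 1, 0; split; [apply: sp_zero | rewrite scale1r addr0].
  by exists 0, y; split; [apply: sp_gen | rewrite scale0r add0r].
- by exists 0, 0; split; [apply: sp_zero | rewrite scale0r addr0].
- exists (c1 + c2), (w1 + w2); split; first exact: sp_add.
  by rewrite e1 e2 scalerDl addrACA.
- exists (c * c1), (c *: w1); split; first exact: sp_scale.
  by rewrite e1 scalerDr scalerA.
Qed.

Lemma capI (F : fieldType) (L : lmodType F) (br : L -> L -> L) (I : L -> Prop) :
  lie_ideal br I -> forall B : seq L, exists E : seq L, (forall e, e \in E -> I e) /\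
    forall w, spanP (fun z => z \in B) w -> I w -> spanP (fun z => z \in E) w.
Proof.
case=> hI0 hIadd hIsc _; elim=> [|b B [E' [hE' IH]]].
  by exists [::]; split.
case: (classic (exists z, spanP (fun z => z \in B) z /\ I (b + z))) => [[z [hz hbz]]|hno].
  exists ((b + z) :: E'); split.
    by move=> e; rewrite in_cons => /orP [/eqP ->|/hE'].
  move=> w /span_cons [c [w' [hw' e]]] hw.
  set u := w + (- c) *: (b + z).
  have hu1 : I u by apply: hIadd => //; apply: hIsc.
  have hu2 : spanP (fun z => z \in B) u.
    have -> : u = w' + (- c) *: z.
      by rewrite /u e scalerDr addrACA scaleNr subrr add0r.
    by apply: sp_add => //; apply: sp_scale.
  have -> : w = c *: (b + z) + u by rewrite /u scaleNr addrC subrK.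
  apply: sp_add; first by apply: sp_scale; apply: sp_gen; rewrite mem_head.
  by apply: (spanP_mono (IH u hu2 hu1)) => y hy; rewrite in_cons hy orbT.
exists E'; split => // w /span_cons [c [w' [hw' e]]] hw.
have [c0|hc] := eqVneq c 0.
  by rewrite e c0 scale0r add0r in hw *; apply: IH.
exfalso; apply: hno; exists (c^-1 *: w'); split; first exact: sp_scale.
have -> : b + c^-1 *: w' = c^-1 *: w by rewrite e scalerDr scalerA mulVf // scale1r.
exact: hIsc.
Qed.

Fixpoint seqs (T : Type) (B : seq T) (n : nat) : seq (seq T) :=
  if n is n'.+1 then [::] :: [seq x :: s | x <- B, s <- seqs B n'] else [:: [::]].

Lemma mem_seqs (T : eqType) (B : seq T) n s :
  all (mem B) s -> (size s <= n)%N -> s \in seqs B n.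
Proof.
elim: n s => [|n IH] [|x s] //=.
move=> /andP [hx hs] hsz; rewrite in_cons; apply/orP; right.
by apply/allpairsP; exists (x, s); split => //; apply: IH.
Qed.

Lemma seqs_all (T : eqType) (B : seq T) n s : s \in seqs B n -> all (mem B) s.
Proof.
elim: n s => [|n IH] s /=; first by rewrite inE => /eqP ->.
rewrite in_cons => /orP [/eqP -> //|/allpairsP [[x s'] [/= hx hs' ->]]].
by rewrite /= hx (IH _ hs').
Qed.

Lemma ideal_adseq (F : fieldType) (L : lmodType F) (br : L -> L -> L) (I : L -> Prop) :
  is_lie_bracket br -> lie_ideal br I -> forall s y, I y -> I (ad_seq br y s).
Proof.
move=> hb [hI0 hIadd hIsc hIbr]; elim=> [//|b s IH] y hy.
rewrite /ad_seq /= -/(ad_seq _ _ _); apply: IH.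
by rewrite (brC hb b y) -scaleN1r; apply: hIsc; apply: hIbr.
Qed.

Definition decQ (F : fieldType) (L : lmodType F) (br : L -> L -> L) (B G : seq L) (x : L) :=
  exists w m, [/\ spanP (fun z => z \in B) w, lie_gen br G m & x = w + m].

Lemma decQ_add (F : fieldType) (L : lmodType F) (br : L -> L -> L) (B G : seq L) x y :
  decQ br B G x -> decQ br B G y -> decQ br B G (x + y).
Proof.
move=> [w1 [m1 [h1 h1' ->]]] [w2 [m2 [h2 h2' ->]]].
by exists (w1 + w2), (m1 + m2); split; [apply: sp_add|apply: lg_add|rewrite addrACA].
Qed.

Lemma decQ_scale (F : fieldType) (L : lmodType F) (br : L -> L -> L) (B G : seq L) c x :
  decQ br B G x -> decQ br B G (c *: x).
Proof.
move=> [w1 [m1 [h1 h1' ->]]].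
by exists (c *: w1), (c *: m1); split; [apply: sp_scale|apply: lg_scale|rewrite scalerDr].
Qed.

Lemma decQ_M (F : fieldType) (L : lmodType F) (br : L -> L -> L) (B G : seq L) m :
  lie_gen br G m -> decQ br B G m.
Proof. by move=> h; exists 0, m; split; [apply: sp_zero| |rewrite add0r]. Qed.

Lemma decQ_W (F : fieldType) (L : lmodType F) (br : L -> L -> L) (B G : seq L) w :
  spanP (fun z => z \in B) w -> decQ br B G w.
Proof. by move=> h; exists w, 0; split; [|apply: lg_zero|rewrite addr0]. Qed.

Lemma decQ_WW (F : fieldType) (L : lmodType F) (br : L -> L -> L) (B T G : seq L) :
  is_lie_bracket br ->
  (forall p q, p \in B -> q \in B -> exists w y,
      [/\ spanP (fun z => z \in B) w, y \in T & br p q = w + y]) ->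
  (forall t, t \in T -> lie_gen br G t) ->
  forall w1 w2, spanP (fun z => z \in B) w1 -> spanP (fun z => z \in B) w2 ->
  decQ br B G (br w1 w2).
Proof.
move=> hb hpair hT w1 w2 h1 h2.
elim: h1 => [p hp||u1 u2 _ IH1 _ IH2|c u _ IH].
- elim: h2 => [q hq||v1 v2 _ IH1 _ IH2|c v _ IH].
  + have [w [y [hw hy ->]]] := hpair p q hp hq.
    by apply: decQ_add; [apply: decQ_W|apply: decQ_M; apply: hT].
  + by rewrite (br0r hb); apply: decQ_M; apply: lg_zero.
  + by rewrite (brDr hb); apply: decQ_add.
  + by rewrite (brZr hb); apply: decQ_scale.
- by rewrite (br0l hb); apply: decQ_M; apply: lg_zero.
- by rewrite (brDl hb); apply: decQ_add.
- by rewrite (brZl hb); apply: decQ_scale.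
Qed.

Theorem lemma3 (F : fieldType) (L : lmodType F) (br : L -> L -> L)
  (a : seq L) (I : L -> Prop) :
  is_lie_bracket br ->
  (forall x : L, lie_gen br a x) ->
  (forall x : L, lie_set br a x -> ad_nilpotent br x) ->
  lie_ideal br I ->
  finite_codim I ->
  lie_fin_gen br I.
Proof.
move=> hb hgen hnil hI [vs hvs].
have hIc := hI; case: hIc => hI0 hIadd hIsc hIbr.
have hspan : forall v, v \in vs -> spanP (lie_set br a) v.
  by move=> v _; apply: (span_gen hb).
have [B [hBS hBv]] := to_list_seq hspan.
have hL : forall x, exists w y, [/\ spanP (fun z => z \in B) w, I y & x = w + y].
  move=> x; have [c [y [hy ->]]] := hvs x.
  by exists (\sum_(i < size vs) c i *: vs`_i), y; split => //; apply: span_sum.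
have [N hN] := uniform_nil hb (fun b hb' => hnil b (hBS b hb')).
have [Ta [hTa hTa']] := choose_list a hL.
have [Tp [hTp hTp']] := choose_list [seq br u v | u <- B, v <- B] hL.
have [E [hE hEI]] := capI hI B.
pose T := Ta ++ Tp ++ E.
have hTI : forall t, t \in T -> I t.
  by move=> t; rewrite !mem_cat => /orP [/hTa|/orP [/hTp|/hE]].
pose G := [seq ad_seq br t s | t <- T, s <- seqs B (size B * N)].
have hpair : forall p q, p \in B -> q \in B -> exists w y,
    [/\ spanP (fun z => z \in B) w, y \in T & br p q = w + y].
  move=> p q hp hq.
  have [w [y [hw hy e]]] : exists w y,
      [/\ spanP (fun z => z \in B) w, y \in Tp & br p q = w + y].
    by apply: hTp'; apply/allpairsP; exists (p, q).
  by exists w, y; split => //; rewrite !mem_cat hy orbT.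
have hG : forall t s, t \in T -> all (mem B) s -> (size s <= size B * N)%N ->
    lie_gen br G (ad_seq br t s).
  move=> t s ht hs hsz; apply: lg_gen; apply/allpairsP; exists (t, s).
  by split => //; apply: mem_seqs.
have hC := claim hb hpair hG hN.
have hTM : forall t, t \in T -> lie_gen br G t by move=> t ht; apply: (hC t [::]).
have hMinv : forall m, lie_gen br G m -> forall b, b \in B -> lie_gen br G (br m b).
  move=> m; elim=> [g hg||x y _ IH1 _ IH2|c x _ IH|x y hx IH1 hy IH2] b hbB.
  - case/allpairsP: hg => [[t s] [/= ht hs ->]].
    rewrite -[br _ b]/(ad_seq br (ad_seq br t s) [:: b]) -ad_seq_cat.
    by apply: hC => //; rewrite all_cat (seqs_all hs) /= hbB.
  - by rewrite (br0l hb); apply: lg_zero.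
  - by rewrite (brDl hb); apply: lg_add; [apply: IH1|apply: IH2].
  - by rewrite (brZl hb); apply: lg_scale; apply: IH.
  - rewrite (brJ hb); apply: lg_add; apply: lg_br => //; [exact: IH1|exact: IH2].
have hMinvL : forall m, lie_gen br G m -> forall w, spanP (fun z => z \in B) w ->
    lie_gen br G (br w m).
  move=> m hm w; elim=> [b hbB||x y _ IH1 _ IH2|c x _ IH].
  - by rewrite (brC hb m b); apply: lgN; apply: hMinv.
  - by rewrite (br0l hb); apply: lg_zero.
  - by rewrite (brDl hb); apply: lg_add.
  - by rewrite (brZl hb); apply: lg_scale.
have hdec : forall x, decQ br B G x.
  move=> x; elim: (hgen x) => [y hy||x1 x2 _ IH1 _ IH2|c x1 _ IH|x1 x2 _ IH1 _ IH2].
  - have [w [t [hw ht ->]]] := hTa' y hy.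
    apply: decQ_add; [exact: decQ_W|apply: decQ_M; apply: hTM].
    by rewrite mem_cat ht.
  - by apply: decQ_M; apply: lg_zero.
  - exact: decQ_add.
  - exact: decQ_scale.
  - case: IH1 => [w1 [m1 [hw1 hm1 ->]]]; case: IH2 => [w2 [m2 [hw2 hm2 ->]]].
    rewrite (brDl hb) !(brDr hb) -addrA; apply: decQ_add.
      exact: (decQ_WW hb hpair hTM).
    apply: decQ_M; apply: lg_add; first exact: hMinvL.
    apply: lg_add; last exact: lg_br.
    by rewrite (brC hb w2 m1); apply: lgN; apply: hMinvL.
have hMI : forall m, lie_gen br G m -> I m.
  move=> m; elim=> [g hg||x y _ IH1 _ IH2|c x _ IH|x y _ IH1 _ IH2].
  - case/allpairsP: hg => [[t s] [/= ht hs ->]].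
    by apply: (ideal_adseq hb hI); apply: hTI.
  - exact: hI0.
  - exact: hIadd.
  - exact: hIsc.
  - exact: hIbr.
exists G => x; split; last exact: hMI.
move=> hx; have [w [m [hw hm e]]] := hdec x.
have hwI : I w.
  have -> : w = x + (-1) *: m by rewrite e scaleN1r addrK.
  by apply: hIadd => //; apply: hIsc; apply: hMI.
have hwE := hEI w hw hwI.
rewrite e; apply: lg_add => //.
elim: hwE => [z hz||x1 x2 _ IH1 _ IH2|c x1 _ IH].
- by apply: hTM; rewrite !mem_cat hz !orbT.
- exact: lg_zero.
- exact: lg_add.
- exact: lg_scale.
Qed.
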